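(* Let $(S,V)$ be a complete semiring-semimodule pair, let $n\ge1$, let $\Gamma$ be an alphabet, and let $M\in (S^{n\times n})^{\Gamma^*\times\Gamma^*}$ be a pushdown transition matrix. Then for all $p\in\Gamma$, $$(M^\omega)_p=\sum_{p'\in\Gamma}(A_M)_{p,p'}\,(M^\omega)_{p'}.$$
   Context: A complete semiring-semimodule pair $(S,V)$ (in the sense of Ésik and Kuich, ''Modern Automata Theory'') consists of a complete starsemiring $S$ (arbitrary sums with infinite associativity/commutativity/distributivity laws, star $s^*=\sum_{j\ge0}s^j$) and a complete $S$-semimodule $V$, with infinite products $\prod_{j\ge1}s_j\in V$ of sequences in $S$ satisfying the axioms of that framework. $M\in (S^{n\times n})^{\Gamma^*\times\Gamma^*}$ (a $\Gamma^*\times\Gamma^*$ matrix with $n\times n$ blocks over $S$) is a pushdown transition matrix if (i) for each $p\in\Gamma$ only finitely many blocks $M_{p,\pi}$ are nonzero, and (ii) $M_{\pi_1,\pi_2}=M_{p,\pi}$ if $\pi_1=p\pi'$, $\pi_2=\pi\pi'$ for some $p\in\Gamma$, $\pi,\pi'\in\Gamma^*$, and $0$ otherwise. $M^*=\sum_{m\ge0}M^m$ with blocks $(M^* )_{\pi,\pi'}$. $M^\omega\in (V^n)^{\Gamma^*}$ is given by $((M^\omega)_\pi)_i=\sum_{\pi_1,\pi_2,\ldots\in\Gamma^*}\sum_{j_1,j_2,\ldots\in\{1,\dots,n\}}(M_{\pi,\pi_1})_{i,j_1}(M_{\pi_1,\pi_2})_{j_1,j_2}\cdots$. For $p,p'\in\Gamma$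 the matrix $(A_M)_{p,p'}\in S^{n\times n}$ is $$(A_M)_{p,p'}=\sum_{\substack{\pi=p_1\dots p_k\in\Gamma^+,\ 1\le j\le k\\ p_j=p'}}M_{p,\pi}\,(M^* )_{p_1,\epsilon}\cdots(M^* )_{p_{j-1},\epsilon}.$$ *)

(* Defs.v *)
From HB Require Import structures.
From mathcomp Require Import all_boot all_algebra.
Set Implicit Arguments. Unset Strict Implicit. Unset Printing Implicit Defensive.
Import GRing.Theory.
Local Open Scope ring_scope.

Definition complete_sum_axioms (X : nmodType) (csum : forall I : Type, (I -> X) -> X) :=
  [/\
      (forall (I : Type) (a : I -> X), (I -> False) -> csum I a = 0),
      (forall (I : Type) (a : I -> X) (i0 : I), (forall i, i = i0) -> csum I a = a i0),
      (forall (I : Type) (a : I -> X) (j k : I), j <> k ->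
          (forall i, i = j \/ i = k) -> csum I a = a j + a k)
    &
      (forall (I J : Type) (a : I -> X) (f : I -> J),
          csum I a = csum J (fun j => csum {i : I | f i = j} (fun i => a (sval i))))].

Record complete_pair (S : pzSemiRingType) (V : lSemiModType S) := CompletePair {
  ssum : forall I : Type, (I -> S) -> S;
  vsum : forall I : Type, (I -> V) -> V;
  (* infinite product  s_0 s_1 s_2 ...  (indices shifted to start at 0) *)
  iprod : (nat -> S) -> V;
  ssum_ax : complete_sum_axioms ssum;
  ssum_distl : forall (I : Type) (a : I -> S) (c : S),
      ssum (fun i => c * a i) = c * ssum a;
  ssum_distr : forall (I : Type) (a : I -> S) (c : S),
      ssum (fun i => a i * c) = ssum a * c;
  vsum_ax : complete_sum_axioms vsum;
  vsum_scaler : forall (I : Type) (v : I -> V) (s : S),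
      vsum (fun i => s *: v i) = s *: vsum v;
  vsum_scalel : forall (I : Type) (a : I -> S) (v : V),
      vsum (fun i => a i *: v) = ssum a *: v;
  iprod_head : forall s : nat -> S, iprod s = s 0%N *: iprod (fun j => s j.+1);
  iprod_block : forall (s : nat -> S) (m : nat -> nat),
      m 0%N = 0%N -> (forall j, (m j < m j.+1)%N) ->
      iprod s = iprod (fun j => \prod_(m j <= k < m j.+1) s k);
  iprod_sum : forall (I : nat -> Type) (a : forall j, I j -> S),
      iprod (fun j => ssum (a j)) =
      vsum (fun f : (forall j, I j) => iprod (fun j => a j (f j)))
}.

Section PDA.
Variables (S : pzSemiRingType) (V : lSemiModType S) (P : complete_pair V).
Variables (Gamma : finType) (n : nat).

Definition block := 'I_n -> 'I_n -> S.
Definition gmatrix := seq Gamma -> seq Gamma -> block.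

Definition is_pushdown (M : gmatrix) : Prop :=
  (forall p : Gamma, exists l : seq (seq Gamma),
      forall pi, pi \notin l -> forall i j, M [:: p] pi i j = 0) /\
  (forall (pi1 pi2 : seq Gamma) i j,
      M pi1 pi2 i j =
      match pi1 with
      | [::] => 0
      | p :: pi' =>
          if suffix pi' pi2
          then M [:: p] (take (size pi2 - size pi') pi2) i j
          else 0
      end).

Definition bmul (A B : block) : block := fun i k => \sum_(j < n) A i j * B j k.

Definition gmul (A B : gmatrix) : gmatrix := fun pi pi'' i k =>
  ssum P (fun x : seq Gamma * 'I_n => A pi x.1 i x.2 * B x.1 pi'' x.2 k).

Definition gone : gmatrix := fun pi pi' i j =>
  if (pi == pi') && (i == j) then 1 else 0.

Fixpoint gpow (M : gmatrix) (m : nat) : gmatrix :=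
  if m is m'.+1 then gmul (gpow M m') M else gone.

Definition gstar (M : gmatrix) : gmatrix := fun pi pi' i j =>
  ssum P (fun m : nat => gpow M m pi pi' i j).

Definition gomega (M : gmatrix) (pi : seq Gamma) (i : 'I_n) : V :=
  vsum P (fun f : nat -> seq Gamma * 'I_n =>
    iprod P (fun k => if k is k'.+1 then M (f k').1 (f k).1 (f k').2 (f k).2
                      else M pi (f 0%N).1 i (f 0%N).2)).

(* (A_M)_{p,p'} : sum over pi = p_1..p_k in Gamma^+ and positions j with
   p_j = p' (0-based position j below) of
   M_{p,pi} (M^* )_{p_1,eps} ... (M^* )_{p_{j-1},eps} *)
Definition AM (M : gmatrix) (p p' : Gamma) : block := fun i i' =>
  ssum P (fun x : {x : seq Gamma * nat | (x.2 < size x.1)%N /\ nth p' x.1 x.2 = p'} =>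
    foldl bmul (M [:: p] (sval x).1)
          [seq gstar M [:: q] [::] | q <- take (sval x).2 (sval x).1] i i').

End PDA.

(* Main.v *)
Require Import Defs.
From HB Require Import structures.
From mathcomp Require Import all_boot all_algebra.
From Stdlib Require Import ClassicalEpsilon ProofIrrelevance FunctionalExtensionality.
Local Open Scope ring_scope.
Set Implicit Arguments. Unset Strict Implicit. Unset Printing Implicit Defensive.
Import GRing.Theory.
Lemma sub_eq (A : Type) (Pr : A -> Prop) (u v : {x | Pr x}) : sval u = sval v -> u = v.
Proof. case: u v => [x px] [y py] /= exy; subst y; by rewrite (proof_irrelevance _ px py). Qed.

Section CSum.
Unset Implicit Arguments.
Variables (X : nmodType) (csum : forall I : Type, (I -> X) -> X).
Set Implicit Arguments.
Hypothesis H : complete_sum_axioms csum.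

Lemma csum_empty I (a : I -> X) : (I -> False) -> csum I a = 0.
Proof. by move: H => [h _ _ _]; apply: h. Qed.
Lemma csum_one I (a : I -> X) i0 : (forall i, i = i0) -> csum I a = a i0.
Proof. by move: H => [_ h _ _]; apply: h. Qed.
Lemma csum_two I (a : I -> X) j k : j <> k -> (forall i, i = j \/ i = k) -> csum I a = a j + a k.
Proof. by move: H => [_ _ h _]; apply: h. Qed.
Lemma csum_part I J (a : I -> X) (f : I -> J) :
  csum I a = csum J (fun j => csum {i : I | f i = j} (fun i => a (sval i))).
Proof. by move: H => [_ _ _ h]; apply: h. Qed.

Lemma csum_ext I (a b : I -> X) : (forall i, a i = b i) -> csum I a = csum I b.
Proof. by move=> e; rewrite (functional_extensionality _ _ e). Qed.

Lemma csum_bij I J (g : J -> I) (h : I -> J) (a : I -> X) (b : J -> X) :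
  cancel g h -> cancel h g -> (forall j, a (g j) = b j) -> csum I a = csum J b.
Proof.
move=> gh hg ab; rewrite (csum_part b g); apply: csum_ext => i.
rewrite (@csum_one _ _ (exist _ (h i) (hg i))) /= -?ab ?hg //.
case=> j e; apply: sub_eq => /=; by rewrite -e gh.
Qed.

Lemma csum0 I (a : I -> X) : (forall i, a i = 0) -> csum I a = 0.
Proof.
move=> a0.
have := csum_part (fun e : Empty_set => match e with end) (fun e : Empty_set => match e return I with end).
rewrite csum_empty; last by case.
move=> ->; apply: csum_ext => i; rewrite a0 csum_empty //; by case; case.
Qed.

Definition pb (Q : Prop) : bool := if excluded_middle_informative Q then true else false.
Lemma pbT (Q : Prop) : pb Q = true <-> Q.
Proof. rewrite /pb; case: excluded_middle_informative => //. Qed.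
Lemma pbF (Q : Prop) : pb Q = false <-> ~ Q.
Proof. rewrite /pb; case: excluded_middle_informative => //. Qed.

Lemma csum_split I (Pr : I -> Prop) (a : I -> X) :
  csum I a = csum {x | Pr x} (fun z => a (sval z)) + csum {x | ~ Pr x} (fun z => a (sval z)).
Proof.
rewrite (csum_part a (fun x => pb (Pr x))) (@csum_two _ _ true false) //; last by case; auto.
congr (_ + _).
  apply: (@csum_bij _ _ (fun z : {x | Pr x} => exist _ (sval z) (proj2 (pbT _) (proj2_sig z)))
     (fun z => exist _ (sval z) (proj1 (pbT _) (proj2_sig z)))) => //.
  by move=> z; apply: sub_eq. by move=> z; apply: sub_eq.
apply: (@csum_bij _ _ (fun z : {x | ~ Pr x} => exist _ (sval z) (proj2 (pbF _) (proj2_sig z)))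
   (fun z => exist _ (sval z) (proj1 (pbF _) (proj2_sig z)))) => //.
  by move=> z; apply: sub_eq. by move=> z; apply: sub_eq.
Qed.

Lemma csum_single I (a : I -> X) i0 : (forall i, i <> i0 -> a i = 0) -> csum I a = a i0.
Proof.
move=> h; rewrite (csum_split (fun i => i = i0)) (@csum_one _ _ (exist (fun i => i = i0) i0 erefl)) /=.
  by rewrite csum0 ?addr0 //; case=> i /= /h.
by case=> i e; apply: sub_eq.
Qed.

Lemma csum_zero_out I (Pr : I -> Prop) (a : I -> X) :
  (forall i, ~ Pr i -> a i = 0) -> csum I a = csum {x | Pr x} (fun z => a (sval z)).
Proof.
move=> h; rewrite (csum_split Pr).
have -> : csum {x | ~ Pr x} (fun z => a (sval z)) = 0 by apply: csum0; case=> i /= /h.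
by rewrite addr0.
Qed.

Lemma csum_add I (a b : I -> X) : csum I (fun i => a i + b i) = csum I a + csum I b.
Proof.
pose c (z : I * bool) := if z.2 then a z.1 else b z.1.
have e1 : csum _ c = csum I (fun i => a i + b i).
  rewrite (csum_part c fst); apply: csum_ext => i.
  rewrite (@csum_two _ _ (exist (fun z : I * bool => z.1 = i) (i, true) erefl)
      (exist (fun z : I * bool => z.1 = i) (i, false) erefl)) //.
  case=> [[i' bb]] /= e; subst i'; case: bb; [left|right]; exact: sub_eq.
rewrite -e1 (csum_part c snd) (@csum_two _ _ true false) //; last by case; auto.
congr (_ + _).
  apply: (@csum_bij _ _ (fun i => exist (fun z : I * bool => z.2 = true) (i, true) erefl)
    (fun z => (sval z).1)) => //.
  by case=> [[i' bb]] /= e; subst bb; apply: sub_eq.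
apply: (@csum_bij _ _ (fun i => exist (fun z : I * bool => z.2 = false) (i, false) erefl)
  (fun z => (sval z).1)) => //.
by case=> [[i' bb]] /= e; subst bb; apply: sub_eq.
Qed.

Lemma csum_option I (a : option I -> X) : csum (option I) a = a None + csum I (fun i => a (Some i)).
Proof.
rewrite (csum_split (fun o => o = None)) (@csum_one _ _ (exist (fun o : option I => o = None) None erefl)) /=; last first.
  by case=> o e; apply: sub_eq.
congr (_ + _).
pose h (z : {o : option I | o <> None}) : I :=
  match z with exist (Some i) _ => i | exist None p => False_rect _ (p erefl) end.
apply: (@csum_bij _ _ (fun i => exist (fun o => o <> None) (Some i) (fun e => ltac:(discriminate e))) h) => //.
by case=> [[i|//] p]; apply: sub_eq.
Qed.

Lemma csum_ord k (a : 'I_k -> X) : csum 'I_k a = \sum_(i < k) a i.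
Proof.
elim: k a => [|k IH] a.
  by rewrite big_ord0 csum_empty //; case.
rewrite big_ord_recl -IH.
rewrite (@csum_bij _ _ (fun o : option 'I_k => if o is Some i then lift ord0 i else ord0)
   (fun i => unlift ord0 i) a (fun o => a (if o is Some i then lift ord0 i else ord0))) //.
- by rewrite csum_option IH.
- by case=> [i|] /=; rewrite ?liftK ?unlift_none.
- by move=> i; case: unliftP.
Qed.

Lemma csum_fin (F : finType) (a : F -> X) : csum F a = \sum_(x : F) a x.
Proof.
rewrite (big_enum_val (A := predT)) /= -csum_ord.
apply: (@csum_bij _ _ enum_val enum_rank); [exact: enum_valK | exact: enum_rankK | by []].
Qed.

Lemma csum_nat (a : nat -> X) : csum nat a = a 0%N + csum nat (fun k => a k.+1).
Proof.
rewrite (@csum_bij _ _ (fun o => if o is Some k then k.+1 else 0%N) (fun k => if k is k'.+1 then Some k' else None) a (fun o => a (if o is Some k then k.+1 else 0%N))) //.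
- by rewrite csum_option.
- by case.
- by case.
Qed.

Lemma csum_prod I J (b : I -> J -> X) :
  csum (I * J) (fun z => b z.1 z.2) = csum I (fun i => csum J (b i)).
Proof.
rewrite (csum_part _ fst); apply: csum_ext => i.
apply: (@csum_bij _ _ (fun j => exist (fun z : I * J => z.1 = i) (i, j) erefl) (fun z => (sval z).2)) => //.
by case=> [[i' j]] /= e; subst i'; apply: sub_eq.
Qed.

Lemma csum_swap I J (b : I -> J -> X) :
  csum I (fun i => csum J (b i)) = csum J (fun j => csum I (fun i => b i j)).
Proof.
rewrite -csum_prod -(csum_prod (fun j i => b i j)).
by apply: (@csum_bij _ _ (fun z => (z.2, z.1)) (fun z => (z.2, z.1))); case.
Qed.

Lemma csum_sig I J (Pr : I * J -> Prop) (a : {z : I * J | Pr z} -> X) :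
  csum {z | Pr z} a =
  csum I (fun i => csum {j | Pr (i, j)} (fun w => a (exist _ (i, sval w) (proj2_sig w)))).
Proof.
rewrite (csum_part _ (fun z => (sval z).1)); apply: csum_ext => i.
have hp : forall z : {z0 : {z : I * J | Pr z} | (sval z0).1 = i}, Pr (i, (sval (sval z)).2).
  by case=> [[[i' j] pz]] /= e; subst i'.
apply: (@csum_bij _ _ (fun w : {j | Pr (i, j)} => exist (fun z0 : {z | Pr z} => (sval z0).1 = i)
   (exist _ (i, sval w) (proj2_sig w)) erefl) (fun z => exist _ (sval (sval z)).2 (hp z))) => //.
- by move=> w; apply: sub_eq.
- by case=> [[[i' j] pz]] /= e; subst i'; apply: sub_eq; apply: sub_eq.
Qed.

Lemma csum_sum_fin I (F : finType) (b : I -> F -> X) :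
  csum I (fun i => \sum_(x : F) b i x) = \sum_(x : F) csum I (fun i => b i x).
Proof.
transitivity (csum I (fun i => csum F (b i))); first by apply: csum_ext => i; rewrite csum_fin.
by rewrite csum_swap csum_fin.
Qed.

Lemma csum_prod2 I J (a : I * J -> X) :
  csum (I * J) a = csum I (fun i => csum J (fun j => a (i, j))).
Proof. rewrite -csum_prod; apply: csum_ext; by case. Qed.

Lemma csum_sub_zero I (P1 P2 : I -> Prop) (a : I -> X) :
  (forall x, P1 x -> ~ P2 x -> a x = 0) ->
  csum {x | P1 x} (fun z => a (sval z)) = csum {x | P1 x /\ P2 x} (fun z => a (sval z)).
Proof.
move=> h; rewrite (csum_zero_out (Pr := fun z : {x | P1 x} => P2 (sval z))); last first.
  by case=> x p1 /= /(h x p1).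
have hp : forall z : {z : {x | P1 x} | P2 (sval z)}, P1 (sval (sval z)) /\ P2 (sval (sval z)).
  by case=> [[x p1] p2].
apply: (@csum_bij _ _ (fun w : {x | P1 x /\ P2 x} =>
   exist (fun z : {x | P1 x} => P2 (sval z)) (exist _ (sval w) (proj1 (proj2_sig w))) (proj2 (proj2_sig w)))
  (fun z => exist _ (sval (sval z)) (hp z))) => //.
- by move=> w; apply: sub_eq.
- by move=> z; do 2 apply: sub_eq.
Qed.

End CSum.
Section Main.
Variables (S : pzSemiRingType) (V : lSemiModType S) (P : complete_pair V).
Variables (n : nat) (Gamma : finType) (M : gmatrix S Gamma n).
Hypothesis HM : forall (pi1 pi2 : seq Gamma) i j,
      M pi1 pi2 i j =
      match pi1 with
      | [::] => 0
      | p :: pi' =>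
          if suffix pi' pi2
          then M [:: p] (take (size pi2 - size pi') pi2) i j
          else 0
      end.

Let HS := ssum_ax P.
Let HV := vsum_ax P.

Definition X := (seq Gamma * 'I_n)%type.
Definition step (x y : X) : S := M x.1 y.1 x.2 y.2.
Definition pcons (x : X) (f : nat -> X) : nat -> X := fun k => if k is k'.+1 then f k' else x.
Definition wt (x : X) (f : nat -> X) : V := iprod P (fun k => step (pcons x f k) (pcons x f k.+1)).
Definition om (x : X) : V := vsum P (fun f : nat -> X => wt x f).

Lemma gomegaE pi i : gomega P M pi i = om (pi, i).
Proof.
rewrite /gomega /om /wt; f_equal; apply: functional_extensionality => f.
by f_equal; apply: functional_extensionality; case.
Qed.

Lemma iprod_shift m (s : nat -> S) :
  iprod P s = (\prod_(k < m) s k) *: iprod P (fun k => s (m + k)%N).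
Proof.
elim: m => [|m IH].
  by rewrite big_ord0 scale1r.
rewrite IH (iprod_head P (fun k => s (m + k)%N)) scalerA big_ord_recr /= addn0.
by do 3 f_equal; apply: functional_extensionality => k; rewrite addnS.
Qed.

Lemma iprod_zero (s : nat -> S) k : s k = 0 -> iprod P s = 0.
Proof.
move=> sk; rewrite (iprod_shift k) (iprod_head P) addn0 sk scale0r scaler0 //.
Qed.

Fixpoint pw (x : X) (t : seq X) : S := if t is y :: t' then step x y * pw y t' else 1.

Lemma pw_rcons x t y : pw x (rcons t y) = pw x t * step (last x t) y.
Proof.
elim: t x => [|z t IH] x /=; first by rewrite mulr1 mul1r.
by rewrite IH mulrA.
Qed.

Lemma last_mkseq x f m : last x (mkseq f m) = pcons x f m.
Proof. by case: m => [//|m]; rewrite mkseqS last_rcons. Qed.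

Lemma prod_pw m x f :
  \prod_(k < m) step (pcons x f k) (pcons x f k.+1) = pw x (mkseq f m).
Proof.
elim: m => [|m IH]; first by rewrite big_ord0.
by rewrite big_ord_recr mkseqS pw_rcons -IH /= last_mkseq.
Qed.

Lemma wt_split m x f :
  wt x f = pw x (mkseq f m) *: wt (pcons x f m) (fun k => f (m + k)%N).
Proof.
rewrite /wt (iprod_shift m) prod_pw; do 2 f_equal.
apply: functional_extensionality => k.
have e : forall k, pcons (pcons x f m) (fun k => f (m + k)%N) k = pcons x f (m + k).
  by case=> [|k']; rewrite ?addn0 ?addnS.
by rewrite !e addnS.
Qed.

Lemma wt_cons x y g : wt x (pcons y g) = step x y *: wt y g.
Proof. by rewrite /wt (iprod_head P). Qed.

Lemma om_unfold x : om x = vsum P (fun y : X => step x y *: om y).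
Proof.
rewrite /om (@csum_bij _ _ HV _ _ (fun z : X * (nat -> X) => pcons z.1 z.2)
   (fun f => (f 0%N, fun k => f k.+1)) _ (fun z => step x z.1 *: wt z.1 z.2)).
- rewrite (csum_prod HV (fun y g => step x y *: wt y g)).
  by apply: csum_ext => y; rewrite (vsum_scaler P).
- by case.
- by move=> f; apply: functional_extensionality; case.
- by case=> y g; rewrite wt_cons.
Qed.

Lemma M_nil pi i j : M [::] pi i j = 0.
Proof. by rewrite HM. Qed.

Lemma step_nil a y : step ([::], a) y = 0.
Proof. exact: M_nil. Qed.

Lemma M_shift tau tau' sigma i j : tau != [::] ->
  M (tau ++ sigma) (tau' ++ sigma) i j = M tau tau' i j.
Proof.
case: tau => [//|q t] _.
rewrite /= HM [RHS]HM suffix_catl // eqxx /=.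
case st: (suffix t tau') => //.
rewrite !size_cat subnDr takel_cat //.
by rewrite leq_subr.
Qed.

Definition above (sigma rho : seq Gamma) : bool := (size sigma < size rho)%N && suffix sigma rho.

Lemma M_exit tau sigma rho i j : tau != [::] -> ~~ above sigma rho -> rho <> sigma ->
  M (tau ++ sigma) rho i j = 0.
Proof.
case: tau => [//|q t] _ nab nes.
rewrite /= HM.
case st: (suffix (t ++ sigma) rho) => //.
exfalso; move/suffixP: st => [r er].
move: nab; rewrite /above er catA suffix_suffix andbT size_cat.
rewrite -{1}(add0n (size sigma)) ltn_add2r lt0n negbK => /eqP/size0nil r0.
by apply: nes; rewrite er catA r0.
Qed.


Local Notation SS I a := (@ssum _ _ P I a).
Local Notation VS I a := (@vsum _ _ P I a).

Lemma rcons_take_last (d : X) t m : size t = m.+1 -> rcons (take m t) (last d t) = t.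
Proof.
case/lastP: t => [//|t z]; rewrite size_rcons => -[<-].
by rewrite last_rcons -[rcons t z]cats1 take_size_cat // cats1.
Qed.

Lemma gpow_path m pi pi' i j :
  gpow P M m.+1 pi pi' i j =
  SS {t : seq X | size t = m} (fun t => pw (pi, i) (rcons (sval t) (pi', j))).
Proof.
elim: m pi' j => [|m IH] pi' j.
  rewrite /= /gmul (csum_single HS (i0 := (pi, i))) /gone /= ?eqxx ?mul1r.
    rewrite (@csum_one _ _ HS _ _ (exist (fun t : seq X => size t = 0%N) [::] erefl)) /= ?mulr1 //.
    by case=> t e; apply: sub_eq; exact: size0nil.
  case=> rho l /= ne; case: ifP => [/andP [/eqP e1 /eqP e2] | _]; last by rewrite mul0r.
  by exfalso; apply: ne; rewrite -e1 -e2.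
transitivity (SS (X * {t : seq X | size t = m})
   (fun z => pw (pi, i) (rcons (sval z.2) z.1) * step z.1 (pi', j))).
  have -> : gpow P M m.+2 pi pi' i j = SS X (fun x => gpow P M m.+1 pi x.1 i x.2 * M x.1 pi' x.2 j) by [].
  rewrite (csum_prod2 HS); apply: csum_ext => x.
  by rewrite IH -(ssum_distr P); case: x.
have hs : forall t : {t : seq X | size t = m.+1}, size (take m (sval t)) = m.
  by case=> t e /=; rewrite size_take e ltnSn.
have hr : forall z : X * {t : seq X | size t = m}, size (rcons (sval z.2) z.1) = m.+1.
  by case=> x [t e] /=; rewrite size_rcons e.
apply: (csum_bij HS (g := fun t => (last (pi, i) (sval t), exist _ _ (hs t)))
   (h := fun z => exist _ _ (hr z))).
- by case=> t e; apply: sub_eq => /=; rewrite rcons_take_last.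
- case=> x [t e] /=; rewrite last_rcons; congr pair; apply: sub_eq => /=.
  by rewrite -cats1 take_size_cat.
- case=> t e /=; rewrite [in RHS]pw_rcons rcons_take_last //.
Qed.

Definition liftX (sigma : seq Gamma) (y : X) : X := (y.1 ++ sigma, y.2).
Definition strip (sigma rho : seq Gamma) := take (size rho - size sigma) rho.
Definition unliftX sigma (y : X) : X := (strip sigma y.1, y.2).

Lemma strip_cat tau sigma : strip sigma (tau ++ sigma) = tau.
Proof. by rewrite /strip size_cat addnK take_size_cat. Qed.

Lemma above_strip sigma rho : above sigma rho -> strip sigma rho ++ sigma = rho /\ strip sigma rho != [::].
Proof.
case/andP=> lt /suffixP [r er]; subst rho; rewrite strip_cat; split => //.
by apply/eqP => r0; move: lt; rewrite r0 ltnn.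
Qed.

Lemma above_cat tau sigma : tau != [::] -> above sigma (tau ++ sigma).
Proof.
move=> tn; rewrite /above size_cat suffix_suffix andbT -{1}(add0n (size sigma)) ltn_add2r lt0n.
by rewrite size_eq0.
Qed.

Lemma wt_lift sigma tau a g : tau != [::] -> (forall k, (g k).1 != [::]) ->
  wt (tau ++ sigma, a) (fun k => liftX sigma (g k)) = wt (tau, a) g.
Proof.
rewrite /wt => tn gn; f_equal; apply: functional_extensionality => k.
have e : forall k, pcons (tau ++ sigma, a) (fun k => liftX sigma (g k)) k = liftX sigma (pcons (tau, a) g k).
  by case.
have ne : forall k, (pcons (tau, a) g k).1 != [::] by case.
by rewrite !e /step /=; apply: M_shift (ne k).
Qed.

Lemma om_A q sigma i :
  VS {f : nat -> X | forall k, above sigma (f k).1} (fun z => wt (q :: sigma, i) (sval z)) = om ([:: q], i).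
Proof.
rewrite /om (csum_zero_out HV (Pr := fun g : nat -> X => forall k, (g k).1 != [::])); last first.
  move=> g /not_all_ex_not [k /negP /negbNE /eqP gk]; rewrite /wt; apply: (iprod_zero (k := k.+1)).
  by rewrite /step /= gk M_nil.
have h1 : forall w : {g : nat -> X | forall k, (g k).1 != [::]},
    forall k, above sigma ((fun k => liftX sigma (sval w k)) k).1.
  by case=> g gn k /=; apply: above_cat.
have h2 : forall z : {f : nat -> X | forall k, above sigma (f k).1},
    forall k, ((fun k => unliftX sigma (sval z k)) k).1 != [::].
  by case=> f fa k /=; case: (above_strip (fa k)).
apply: (csum_bij HV (g := fun w => exist _ _ (h1 w)) (h := fun z => exist _ _ (h2 z))).
- case=> g gn; apply: sub_eq; apply: functional_extensionality => k /=.
  by rewrite /unliftX /liftX /= strip_cat; case: (g k).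
- case=> f fa; apply: sub_eq; apply: functional_extensionality => k /=.
  by rewrite /unliftX /liftX /=; case: (above_strip (fa k)) => -> _; case: (f k).
- by case=> g gn /=; apply: (@wt_lift sigma [:: q] i g isT gn).
Qed.

Definition nab (sigma : seq Gamma) (f : nat -> X) : pred nat := fun k => ~~ above sigma (f k).1.
Definition Q sigma m (f : nat -> X) := (forall k, (k < m)%N -> above sigma (f k).1) /\ ~~ above sigma (f m).1.

Lemma exP sigma (f : nat -> X) : ~ (forall k, above sigma (f k).1) -> exists k, nab sigma f k.
Proof. by move/not_all_ex_not => [k hk]; exists k; apply/negP. Qed.

Lemma minQ sigma f (nf : ~ (forall k, above sigma (f k).1)) m :
  ex_minn (exP nf) = m <-> Q sigma m f.
Proof.
case: ex_minnP => m0 H0 Hmin; split.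
  move=> <-; split => // k lt; apply/negPn/negP => hk.
  by have := Hmin k hk; rewrite leqNgt lt.
case=> h1 h2; apply/eqP; rewrite eqn_leq Hmin //= leqNgt; apply/negP => lt.
by have := h1 m0 lt; rewrite /nab in H0; rewrite (negbTE H0).
Qed.

Lemma partB1 sigma (a : (nat -> X) -> V) :
  VS {f : nat -> X | ~ forall k, above sigma (f k).1} (fun z => a (sval z)) =
  VS nat (fun m => VS {f | Q sigma m f} (fun z => a (sval z))).
Proof.
rewrite (csum_part HV _ (fun z => ex_minn (exP (proj2_sig z)))).
apply: csum_ext => m.
have hQ : forall z : {z : {f : nat -> X | ~ forall k, above sigma (f k).1} | ex_minn (exP (proj2_sig z)) = m},
   Q sigma m (sval (sval z)).
  by move=> z; apply/(minQ (proj2_sig (sval z))); exact: (proj2_sig z).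
have hN : forall f, Q sigma m f -> ~ forall k, above sigma (f k).1.
  by move=> f [_ q] hall; move: q; rewrite hall.
have hM : forall w : {f | Q sigma m f}, ex_minn (exP (hN _ (proj2_sig w))) = m.
  by move=> w; apply/minQ; exact: (proj2_sig w).
apply: (csum_bij HV (g := fun w => exist _ (exist _ (sval w) (hN _ (proj2_sig w))) (hM w))
   (h := fun z => exist _ (sval (sval z)) (hQ z))) => //.
- by move=> w; apply: sub_eq.
- by move=> z; do 2 apply: sub_eq.
Qed.

Definition glue (y : X) (s : seq X) (g : nat -> X) : nat -> X :=
  fun k => nth (g (k - (size s).+1)%N) (rcons s y) k.

Lemma glue_lt y s g k : (k < size s)%N -> glue y s g k = nth y s k.
Proof. by move=> lt; rewrite /glue nth_rcons lt (set_nth_default y). Qed.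

Lemma glue_m y s g : glue y s g (size s) = y.
Proof. by rewrite /glue nth_rcons ltnn eqxx. Qed.

Lemma glue_gt y s g k : glue y s g ((size s).+1 + k)%N = g k.
Proof. by rewrite /glue nth_default ?size_rcons ?leq_addr // addKn. Qed.

Lemma mkseq_glue y s g : mkseq (glue y s g) (size s) = s.
Proof.
apply: (@eq_from_nth _ y); first by rewrite size_mkseq.
by move=> k; rewrite size_mkseq => lt; rewrite nth_mkseq // glue_lt.
Qed.

Lemma glue_id (f : nat -> X) m : glue (f m) (mkseq f m) (fun k => f (m.+1 + k)%N) = f.
Proof.
apply: functional_extensionality => k; rewrite /glue size_mkseq nth_rcons size_mkseq.
case: ltngtP => [lt|gt|->]; first by rewrite nth_mkseq.
  by rewrite subnKC.
by [].
Qed.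

Lemma wt_glue x y s g : wt x (glue y s g) = pw x (rcons s y) *: wt y g.
Proof.
rewrite (wt_split (size s).+1) mkseqS mkseq_glue /= glue_m; congr (_ *: wt _ _).
by apply: functional_extensionality => k; rewrite glue_gt.
Qed.

Definition R sigma m (w : X * seq X) :=
  size w.2 = m /\ all (fun y : X => above sigma y.1) w.2 /\ ~~ above sigma w.1.1.

Lemma partB2 sigma m x0 :
  VS {f | Q sigma m f} (fun z => wt x0 (sval z)) =
  VS {w | R sigma m w} (fun w => pw x0 (rcons (sval w).2 (sval w).1) *: om (sval w).1).
Proof.
transitivity (VS ({w | R sigma m w} * (nat -> X))
    (fun z => pw x0 (rcons (sval z.1).2 (sval z.1).1) *: wt (sval z.1).1 z.2)); last first.
  rewrite (csum_prod HV (fun w g => pw x0 (rcons (sval w).2 (sval w).1) *: wt (sval w).1 g)).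
  by apply: csum_ext => w; rewrite (vsum_scaler P).
have hg : forall z : {w | R sigma m w} * (nat -> X), Q sigma m (glue (sval z.1).1 (sval z.1).2 z.2).
  case=> [[[y s] [/= sz [al nb]]] g] /=; split.
    move=> k lt; rewrite glue_lt ?sz //; apply: (allP al); apply: mem_nth; by rewrite sz.
  by rewrite -sz glue_m.
have hh : forall z : {f | Q sigma m f}, R sigma m (sval z m, mkseq (sval z) m).
  case=> f [h1 h2] /=; split; first by rewrite size_mkseq.
  split => //; apply/allP => y /mapP [k]; rewrite mem_iota add0n => /andP [_ lt] ->.
  exact: h1.
apply: (csum_bij HV (g := fun z => exist _ _ (hg z))
   (h := fun z => (exist _ _ (hh z), fun k => sval z (m.+1 + k)%N))).
- case=> [[[y s] [/= sz rr]] g]; congr pair.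
    by apply: sub_eq => /=; rewrite -sz glue_m mkseq_glue.
  apply: functional_extensionality => k /=; by rewrite -sz glue_gt.
- by case=> f qf; apply: sub_eq => /=; rewrite glue_id.
- by case=> [[[y s] rr] g] /=; rewrite wt_glue.
Qed.

Lemma pw_lift sigma x u : all (fun y : X => y.1 != [::]) (belast x u) ->
  pw (liftX sigma x) (map (liftX sigma) u) = pw x u.
Proof.
elim: u x => [|y u IH] x //= /andP [xn rest].
by rewrite IH //; congr (_ * _); apply: M_shift.
Qed.

Lemma pw_zero x t z y : y \in t -> y.1 = [::] -> pw x (rcons t z) = 0.
Proof.
elim: t x => [//|y' t IH] x /=; rewrite in_cons => /orP [/eqP -> y0 | yin y0].
  by case: t {IH} => [|a t] /=; rewrite /step y0 M_nil mul0r mulr0.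
by rewrite (IH _ yin y0) mulr0.
Qed.

Lemma partB4 q sigma m i j :
  SS {s | R sigma m ((sigma, j), s)} (fun s => pw (q :: sigma, i) (rcons (sval s) (sigma, j))) =
  gpow P M m.+1 [:: q] [::] i j.
Proof.
rewrite gpow_path (@csum_sub_zero _ _ HS (seq X) (fun t => size t = m) (fun t => all (fun y : X => y.1 != [::]) t) (fun t => pw ([:: q], i) (rcons t ([::], j)))); last first.
  move=> t _ /negP; rewrite -has_predC => /hasP [y yin /negPn /eqP y0].
  exact: pw_zero yin y0.
have hg : forall t : {t : seq X | size t = m /\ all (fun y : X => y.1 != [::]) t},
    R sigma m ((sigma, j), map (liftX sigma) (sval t)).
  case=> t [sz al] /=; split; first by rewrite size_map.
  split; last by rewrite /above ltnn.
  rewrite all_map; apply/allP => y yin /=; apply: above_cat; exact: (allP al).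
have hh : forall s : {s | R sigma m ((sigma, j), s)},
    size (map (unliftX sigma) (sval s)) = m /\ all (fun y : X => y.1 != [::]) (map (unliftX sigma) (sval s)).
  case=> s [/= sz [al _]]; split; first by rewrite size_map.
  rewrite all_map; apply/allP => y yin /=; by case: (above_strip (allP al y yin)).
apply: (csum_bij HS (g := fun t => exist (fun s => R sigma m ((sigma, j), s)) _ (hg t)) (h := fun s => exist (fun t => size t = m /\ all (fun y : X => y.1 != [::]) t) _ (hh s))).
- case=> t tt; apply: sub_eq => /=; rewrite -map_comp map_id_in // => y _ /=.
  by rewrite /unliftX /liftX /= strip_cat; case: y.
- case=> s [/= sz [al nb]]; apply: sub_eq => /=; rewrite -map_comp map_id_in // => y yin /=.
  by rewrite /unliftX /liftX /=; case: (above_strip (allP al y yin)) => -> _; case: y {yin}.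
- case=> t [sz al] /=.
  rewrite -[(sigma, j)]/(liftX sigma ([::], j)) -map_rcons.
  rewrite -[(q :: sigma, i)]/(liftX sigma ([:: q], i)) pw_lift //.
  by rewrite belast_rcons /= al.
Qed.

Lemma partB3 q sigma m i :
  VS {w | R sigma m w} (fun w => pw (q :: sigma, i) (rcons (sval w).2 (sval w).1) *: om (sval w).1) =
  \sum_(j < n) gpow P M m.+1 [:: q] [::] i j *: om (sigma, j).
Proof.
rewrite (csum_sig HV) (csum_prod2 HV) (csum_single HV (i0 := sigma)); last first.
  move=> rho nrs; apply: csum0 => // j; apply: csum0 => // -[s [/= sz [al nb]]] /=.
  rewrite pw_rcons.
  have : last (q :: sigma, i) s \in (q :: sigma, i) :: s by apply: mem_last.
  rewrite in_cons => /orP [/eqP -> | yin].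
    by rewrite /step /= -[q :: sigma]/([:: q] ++ sigma) M_exit // mulr0 scale0r.
  case: (above_strip (allP al _ yin)) => e ne.
  by rewrite /step -e M_exit // mulr0 scale0r.
rewrite (csum_fin HV); apply: eq_bigr => j _.
by rewrite /= (vsum_scalel P) partB4.
Qed.

Lemma key q sigma i :
  om (q :: sigma, i) = om ([:: q], i) + \sum_(j < n) gstar P M [:: q] [::] i j *: om (sigma, j).
Proof.
rewrite {1}/om (csum_split HV (fun f : nat -> X => forall k, above sigma (f k).1)) /= om_A partB1.
congr (_ + _).
transitivity (VS nat (fun m => \sum_(j < n) gpow P M m.+1 [:: q] [::] i j *: om (sigma, j))).
  by apply: csum_ext => m; rewrite partB2 partB3.
rewrite (csum_sum_fin HV); apply: eq_bigr => j _.
rewrite (vsum_scalel P); congr (_ *: _).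
rewrite /gstar [RHS](csum_nat HS).
have -> : gpow P M 0 [:: q] [::] i j = 0 by [].
by rewrite add0r.
Qed.

Lemma om_nil l : om ([::], l) = 0.
Proof.
apply: csum0 => // f; rewrite /wt; apply: (iprod_zero (k := 0%N)).
exact: step_nil.
Qed.

Lemma expand d pi (B : block S n) i :
  \sum_(l < n) B i l *: om (pi, l) =
  \sum_(j < size pi) \sum_(l' < n)
     (foldl (@bmul S n) B [seq gstar P M [:: q] [::] | q <- take j pi]) i l' *: om ([:: nth d pi j], l').
Proof.
elim: pi B => [|q sigma IH] B.
  by rewrite big_ord0 big1 // => l _; rewrite om_nil scaler0.
under eq_bigr do rewrite key scalerDr.
rewrite big_split /= big_ord_recl /=; congr (_ + _).
rewrite -IH.
under eq_bigr do rewrite scaler_sumr.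
rewrite exchange_big; apply: eq_bigr => j _.
rewrite /bmul scaler_suml; apply: eq_bigr => l _.
by rewrite scalerA.
Qed.

Lemma ord_sub k (a : nat -> V) :
  \sum_(j < k) a (nat_of_ord j) = VS {j : nat | (j < k)%N} (fun z => a (sval z)).
Proof.
rewrite -(csum_fin HV).
apply: (csum_bij HV (g := fun z : {j : nat | (j < k)%N} => Ordinal (proj2_sig z))
   (h := fun o : 'I_k => exist (fun j : nat => (j < k)%N) (nat_of_ord o) (ltn_ord o))) => //.
- by move=> z; apply: sub_eq.
- by move=> o; apply: val_inj.
Qed.

Lemma main_sec p i :
  om ([:: p], i) = \sum_(p' : Gamma) \sum_(j < n) AM P M p p' i j *: om ([:: p'], j).
Proof.
pose F (x : seq Gamma * nat) := \sum_(l' < n) (foldl (@bmul S n) (M [:: p] x.1)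
   [seq gstar P M [:: q] [::] | q <- take x.2 x.1]) i l' *: om ([:: nth p x.1 x.2], l').
transitivity (VS {x : seq Gamma * nat | (x.2 < size x.1)%N} (fun x => F (sval x))).
  rewrite om_unfold (csum_prod2 HV) (csum_sig HV).
  apply: csum_ext => pi /=.
  rewrite (csum_fin HV) (expand p pi (M [:: p] pi) i) (@ord_sub (size pi) (fun j => F (pi, j))).
  by [].
symmetry.
pose C (z : Gamma * (seq Gamma * nat)) := (z.2.2 < size z.2.1)%N /\ nth z.1 z.2.1 z.2.2 = z.1.
pose G (z : Gamma * (seq Gamma * nat)) := \sum_(l' < n) (foldl (@bmul S n) (M [:: p] z.2.1)
   [seq gstar P M [:: q] [::] | q <- take z.2.2 z.2.1]) i l' *: om ([:: z.1], l').
transitivity (VS {z | C z} (fun z => G (sval z))).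
  rewrite (csum_sig HV) (csum_fin HV); apply: eq_bigr => p' _ /=.
  rewrite (csum_sum_fin HV); apply: eq_bigr => j _.
  by rewrite /AM -(vsum_scalel P).
have hg : forall x : {x : seq Gamma * nat | (x.2 < size x.1)%N}, C (nth p (sval x).1 (sval x).2, sval x).
  case=> [[pi j] lt] /=; split => //; exact: set_nth_default.
have hh : forall z : {z | C z}, ((sval z).2.2 < size (sval z).2.1)%N.
  by case=> z [lt e].
apply: (csum_bij HV (g := fun x => exist C _ (hg x))
   (h := fun z => exist (fun x : seq Gamma * nat => (x.2 < size x.1)%N) _ (hh z))).
- by case=> x lt; apply: sub_eq.
- case=> [[p' [pi j]] [lt e]]; apply: sub_eq => /=; congr pair.
  by move: e => /= e; rewrite -[RHS]e; apply: set_nth_default.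
- by [].
Qed.

End Main.

Unset Implicit Arguments.

Theorem theorem4 (S : pzSemiRingType) (V : lSemiModType S) (P : complete_pair V)
    (n : nat) (Gamma : finType) (M : gmatrix S Gamma n) :
  (1 <= n)%N -> is_pushdown M ->
  forall (p : Gamma) (i : 'I_n),
    gomega P M [:: p] i =
    \sum_(p' : Gamma) \sum_(j < n) AM P M p p' i j *: gomega P M [:: p'] j.
Proof.
move=> _ [_ HM] p i.
rewrite gomegaE (main_sec P HM p i).
apply: eq_bigr => p' _; apply: eq_bigr => j _.
by rewrite gomegaE.
Qed.
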